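(* Let $\mathbf{X}$ be a finite tournament isomorphic to an induced subtournament of $\mathbf{S}(2)$. Then there exists a finite tournament $\mathbf{Y}$ isomorphic to an induced subtournament of $\mathbf{S}(2)$ such that every extension of $\mathbf{X}$ in $\mathcal{P}_2$ embeds into every extension of $\mathbf{Y}$ in $\mathcal{P}_2$.
   Context: $\mathbf{S}(2)$ is the tournament whose vertices are the points of the unit circle of $\mathbb{C}$ with rational argument, with an arc from $x$ to $y$ iff $0<\arg(y/x)<\pi$. $\mathcal{P}_2$ is the class of finite structures $\mathbf{A}=(A,<^{\mathbf{A}},P_1^{\mathbf{A}},P_2^{\mathbf{A}})$ with $<^{\mathbf{A}}$ a linear order and $(P_1^{\mathbf{A}},P_2^{\mathbf{A}})$ a partition of $A$; an embedding is an isomorphism onto a substructure (order-preserving injection preserving $P_1$ and $P_2$). Writing $a\sim b$ when $a,b$ lie in the same part, $p(\mathbf{A})$ is the tournament on $A$ with an arc from $a$ to $b$ iff either ($a\sim b$ and $a<^{\mathbf{A}}b$) or ($a\not\sim b$ and $b<^{\mathbf{A}}a$). An extension of a tournament $\mathbf{X}$ is any $\mathbf{A}\in\mathcal{P}_2$ with $p(\mathbf{A})=\mathbf{X}$. *)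

(* Defs.v *)
From HB Require Import structures.
From mathcomp Require Import all_boot all_order all_algebra.
From Stdlib Require Import Reals.
From mathcomp Require Import Rstruct.
Set Implicit Arguments. Unset Strict Implicit. Unset Printing Implicit Defensive.
Import Order.TTheory GRing.Theory Num.Theory.
Local Open Scope ring_scope.

Definition is_tournament (T : finType) (E : rel T) : Prop :=
  (forall x, ~~ E x x) /\
  (forall x y, x != y -> (E x y || E y x) && ~~ (E x y && E y x)).

(** A vertex is a point e^{i q} of the unit circle with
    rational argument q (in radians); we index it by q : rat (distinct
    rationals give distinct points since pi is irrational).  For
    x = e^{i q}, y = e^{i q'}, the arguments of y/x are the reals
    q' - q + 2 k pi (k integer); there is an arc x -> y iff one of them lies
    in the open interval (0, pi), i.e. iff 0 < arg(y/x) < pi. *)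
Definition S2_arc (q q' : rat) : Prop :=
  exists k : int,
    (0 < (ratr q' : Rdefinitions.R) - ratr q + k%:~R * 2 * PI)%R /\
    ((ratr q' : Rdefinitions.R) - ratr q + k%:~R * 2 * PI < PI)%R.

Definition S2_embeddable (T : finType) (E : rel T) : Prop :=
  exists f : T -> rat, injective f /\
    (forall x y, E x y <-> S2_arc (f x) (f y)).

(** A structure of P_2 on the finite set T: a strict linear order lt and a
    partition (P_1, P_2) of T, encoded by c : T -> bool with
    P_1 = [pred x | c x] and P_2 = [pred x | ~~ c x]. *)
Definition is_strict_linear_order (T : finType) (lt : rel T) : Prop :=
  (forall x, ~~ lt x x) /\
  (forall x y z, lt x y -> lt y z -> lt x z) /\
  (forall x y, x != y -> lt x y || lt y x).

Definition p_arc (T : finType) (lt : rel T) (c : T -> bool) : rel T :=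
  fun a b => ((c a == c b) && lt a b) || ((c a != c b) && lt b a).

Definition is_extension (T : finType) (E : rel T) (ltA : rel T)
    (cA : T -> bool) : Prop :=
  is_strict_linear_order ltA /\ (forall a b, p_arc ltA cA a b = E a b).

Definition P2_embedding (T U : finType) (ltA : rel T) (cA : T -> bool)
    (ltB : rel U) (cB : U -> bool) (f : T -> U) : Prop :=
  injective f /\ (forall x y, ltB (f x) (f y) = ltA x y) /\
  (forall x, cB (f x) = cA x).

(* Main.v *)
Require Import Defs.
From HB Require Import structures.
From mathcomp Require Import all_boot all_order all_algebra.
From Stdlib Require Import Reals.
From mathcomp Require Import Rstruct.
From mathcomp Require Import reals zify ring lra.
Set Implicit Arguments. Unset Strict Implicit. Unset Printing Implicit Defensive.

Section Comb.

Lemma p_arc_ext (T : finType) (l1 l2 : rel T) (c1 c2 : T -> bool) x y :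
  (forall a b, l1 a b = l2 a b) -> (forall a, c1 a = c2 a) ->
  p_arc l1 c1 x y = p_arc l2 c2 x y.
Proof. by move=> hl hc; rewrite /p_arc !hl !hc. Qed.

Lemma slo_tournament (T : finType) (lt : rel T) (c : T -> bool) :
  is_strict_linear_order lt -> is_tournament (p_arc lt c).
Proof.
move=> [irr [tr tot]]; split.
  by move=> x; rewrite /p_arc (negbTE (irr x)) !andbF.
move=> x y nxy; have := tot _ _ nxy.
have asym : ~~ (lt x y && lt y x).
  by apply/negP => /andP [h1 h2]; have := irr x; rewrite (tr _ _ _ h1 h2).
move: asym; rewrite /p_arc.
by case: (c x); case: (c y); case: (lt x y); case: (lt y x).
Qed.

Definition rk (M r k : nat) := if k < r then k + M - r else k - r.

Lemma p_arc_rot (T : finType) (key : T -> nat) (col : T -> bool) M r s x y :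
  key x < M -> key y < M -> r <= M ->
  p_arc (fun a b => rk M r (key a) < rk M r (key b))
        (fun a => col a (+) s (+) (key a < r)) x y =
  p_arc (fun a b => key a < key b) col x y.
Proof.
move=> hx hy hr; rewrite /p_arc /rk.
case: (ltnP (key x) r) => h1; case: (ltnP (key y) r) => h2;
 case: (col x); case: (col y); case: s => /=; lia.
Qed.

Definition rank (T : finType) (lt : rel T) (x : T) := #|[pred y | lt y x]|.

Lemma rank_lt (T : finType) (lt : rel T) :
  is_strict_linear_order lt -> forall x y, lt x y = (rank lt x < rank lt y).
Proof.
move=> [irr [tr tot]].
have H : forall x y, lt x y -> rank lt x < rank lt y.
  move=> x y lxy; rewrite /rank; apply: proper_card; apply/properP; split.
    by apply/subsetP => z; rewrite !inE => h; exact: tr h lxy.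
  by exists x; rewrite !inE // (negbTE (irr x)).
move=> x y; apply/idP/idP; first exact: H.
move=> h; case: (eqVneq x y) => [exy|nxy]; first by rewrite exy ltnn in h.
case/orP: (tot _ _ nxy) => // lyx; have := H _ _ lyx; lia.
Qed.

Lemma rank_bound (T : finType) (lt : rel T) :
  is_strict_linear_order lt -> forall x, rank lt x < #|T|.
Proof.
move=> [irr _] x; rewrite /rank [#|T|](cardD1 x) inE add1n ltnS.
apply: subset_leq_card; apply/subsetP => z; rewrite !inE => h.
by apply/andP; split=> //; apply/eqP => ezx; rewrite ezx (negbTE (irr x)) in h.
Qed.

Lemma rank_inj (T : finType) (lt : rel T) :
  is_strict_linear_order lt -> injective (rank lt).
Proof.
move=> hl x y e; case: (eqVneq x y) => // nxy.
have [irr [tr tot]] := hl.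
by case/orP: (tot _ _ nxy); rewrite (rank_lt hl) e ltnn.
Qed.

Lemma slo_min (T : finType) (lt : rel T) (x0 : T) :
  is_strict_linear_order lt -> exists m, forall x, x != m -> lt m x.
Proof.
move=> hl; have [irr [tr tot]] := hl.
case: (arg_minnP (rank lt) (erefl (x0 \in predT))) => m _ hm.
exists m => x nxm; case/orP: (tot _ _ nxm) => // lxm.
have := hm x isT; rewrite (rank_lt hl) in lxm; lia.
Qed.

Lemma keyed_slo (T : finType) (key : T -> nat) :
  injective key -> is_strict_linear_order (fun a b => key a < key b).
Proof.
move=> ik; split; first by move=> x; rewrite ltnn.
split; first by move=> x y z; lia.
move=> x y nxy; have : key x != key y by apply: contra nxy => /eqP /ik ->.
lia.
Qed.

Lemma ext_unique (T : finType) (E : rel T) l1 c1 l2 c2 (m : T) :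
  is_extension E l1 c1 -> is_extension E l2 c2 ->
  (forall x, x != m -> l1 m x) -> (forall x, x != m -> l2 m x) ->
  c1 m = c2 m ->
  (forall x, c1 x = c2 x) /\ (forall x y, l1 x y = l2 x y).
Proof.
move=> [[irr1 [tr1 tot1]] p1] [[irr2 [tr2 tot2]] p2] m1 m2 cm.
have as1 : forall x y, l1 x y -> l1 y x = false.
  by move=> x y h; apply/negbTE/negP => h'; have := irr1 x; rewrite (tr1 _ _ _ h h').
have as2 : forall x y, l2 x y -> l2 y x = false.
  by move=> x y h; apply/negbTE/negP => h'; have := irr2 x; rewrite (tr2 _ _ _ h h').
have hc : forall x, c1 x = c2 x.
  move=> x; case: (eqVneq x m) => [->//|nxm].
  have := p1 m x; rewrite -(p2 m x) /p_arc (m1 _ nxm) (m2 _ nxm).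
  rewrite (as1 _ _ (m1 _ nxm)) (as2 _ _ (m2 _ nxm)) !andbT !andbF !orbF cm.
  by case: (c1 x); case: (c2 x); case: (c2 m).
split=> // x y; case: (eqVneq x y) => [->|nxy].
  by rewrite (negbTE (irr1 y)) (negbTE (irr2 y)).
have e1 := p1 x y; rewrite -(p2 x y) /p_arc !hc in e1.
have e2 := p1 y x; rewrite -(p2 y x) /p_arc !hc in e2.
have t2 := tot2 _ _ nxy; have a2 := as2 x y; have a2' := as2 y x.
case/orP: (tot1 _ _ nxy) => h; rewrite ?h ?(as1 _ _ h) in e1 e2 *;
move: e1 e2 t2 a2 a2'; case: (c2 x); case: (c2 y); case: (l2 x y); case: (l2 y x);
 move=> /=; intuition discriminate.
Qed.

Lemma pullback (T U : finType) (E : rel T) (F : rel U) (g : T -> U) lt c :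
  injective g -> (forall x y, F (g x) (g y) = E x y) -> is_extension F lt c ->
  is_extension E (fun x y => lt (g x) (g y)) (fun x => c (g x)).
Proof.
move=> ig hg [[irr [tr tot]] hp]; split; last by move=> a b; rewrite -hg -hp.
split=> //; split; first by move=> x y z; apply: tr.
by move=> x y nxy; apply: tot; apply: contra nxy => /eqP /ig ->.
Qed.

End Comb.

Lemma dm (a a' b b' n : nat) : a * n + b = a' * n + b' -> b < n -> b' < n -> a = a' /\ b = b'.
Proof. move=> e h h'.
have : a = a'.
  case: (ltngtP a a') => [h2|h2|//].
  - have := leq_mul h2 (leqnn n). lia.
  - have := leq_mul h2 (leqnn n). lia.
move=> ea; subst; lia.
Qed.

Lemma sep (a b n : nat) : a != b -> a * n + n <= b * n \/ b * n + n <= a * n.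
Proof.
case: (ltngtP a b) => h // _.
- left; have := leq_mul h (leqnn n); lia.
- right; have := leq_mul h (leqnn n); lia.
Qed.

Definition klt (U : finType) (key : U -> nat) : rel U := fun a b => key a < key b.

Definition bnum (T : finType) (lt0 : rel T) (j : 'I_4 * T) := j.1 * #|T| + rank lt0 j.2.
Definition keyY (T : finType) (lt0 : rel T) (u : T * ('I_4 * T)) :=
  bnum lt0 u.2 * #|T| + rk #|T| (rank lt0 u.2.2) (rank lt0 u.1).
Definition colY (T : finType) (lt0 : rel T) (c0 : T -> bool) (u : T * ('I_4 * T)) :=
  c0 u.1 (+) odd u.2.1 (+) (rank lt0 u.1 < rank lt0 u.2.2).

Lemma core (T : finType) (E : rel T) lt0 c0 : is_extension E lt0 c0 ->
  injective (keyY lt0) /\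
  forall (ltA : rel T) (cA : T -> bool), is_extension E ltA cA ->
  forall ltB cB, is_extension (p_arc (klt (keyY lt0)) (colY lt0 c0)) ltB cB ->
  exists f : T -> T * ('I_4 * T), P2_embedding ltA cA ltB cB f.
Proof.
move=> H0; have [S0 P0] := H0.
set n := #|T|.
have rb := rank_bound S0; rewrite -/n in rb.
have ri := rank_inj S0.
have rkb : forall r k, k < n -> rk n r k < n by move=> r k; rewrite /rk; case: ifP; lia.
have bnb : forall j, bnum lt0 j < 4 * n.
  by move=> [t v]; rewrite /bnum /=; have := rb v; have := ltn_ord t; rewrite -/n; nia.
have kinj : injective (keyY lt0).
  move=> [x [t v]] [x' [t' v']]; rewrite /keyY /= -/n => e.
  have [e1 e2] := dm e (rkb _ _ (rb x)) (rkb _ _ (rb x')).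
  move: e1; rewrite /bnum /= -/n => e1.
  have [e3 e4] := dm e1 (rb v) (rb v').
  have ev := ri _ _ e4; subst v'.
  have et : t = t' by apply: val_inj.
  subst t'; move: e2; rewrite /rk => e2.
  have : rank lt0 x = rank lt0 x' by move: e2; have := rb x; have := rb x'; have := rb v; do 2 case: ifP; lia.
  by move/ri ->.
split=> // ltA cA HA ltB cB HB.
case: (pickP T) => [x0 _|T0]; last first.
  by exists (fun x => (x, (ord0, x))); split; [move=> x| split; move=> x]; have := T0 x.
set M := 4 * n * n.
have kyb : forall u, keyY lt0 u < M.
  move=> [x j]; rewrite /keyY /= -/n /M; have := bnb j; have := rkb (rank lt0 j.2) _ (rb x); nia.
have [w hw] := slo_min (x0, (ord0, x0)) HB.1.
have [v hv] := slo_min x0 HA.1.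
set r := keyY lt0 w.
set s := colY lt0 c0 w (+) cB w.
pose lt' := fun a b => rk M r (keyY lt0 a) < rk M r (keyY lt0 b).
pose col' := fun a => colY lt0 c0 a (+) s (+) (keyY lt0 a < r).
have rM : r < M by apply: kyb.
have HB' : is_extension (p_arc (klt (keyY lt0)) (colY lt0 c0)) lt' col'.
  split.
    apply: (keyed_slo (key := fun a => rk M r (keyY lt0 a))).
    move=> a b; rewrite /rk => e; apply: kinj; move: e; have := kyb a; have := kyb b; do 2 case: ifP; lia.
  by move=> a b; rewrite /lt' /col' p_arc_rot // ?kyb // ltnW.
have hw' : forall u, u != w -> lt' w u.
  move=> u nuw; rewrite /lt' /rk -/r ltnn subnn.
  have : keyY lt0 u != r by apply: contra nuw => /eqP /kinj ->.
  have := kyb u; case: ifP; lia.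
have cw : cB w = col' w by rewrite /col' /s ltnn; case: (cB w); case: (colY lt0 c0 w).
have [hc hl] := ext_unique HB HB' hw hw' cw.
set iv := rank lt0 v.
set bw := bnum lt0 w.2.
have rw : bw * n <= r < bw * n + n.
  rewrite /r /bw /keyY -/n. have := rkb (rank lt0 w.2.2) _ (rb w.1). move=> h; apply/andP; split; [exact: leq_addr | by rewrite ltn_add2l].
suff claim : forall t : 'I_4, bnum lt0 (t, v) != bw -> cB (v, (t, v)) = cA v ->
    exists f : T -> T * ('I_4 * T), P2_embedding ltA cA ltB cB f.
  have key_v : forall t : 'I_4, keyY lt0 (v,(t,v)) = bnum lt0 (t,v) * n.
    by move=> t; rewrite /keyY /= /rk ltnn subnn addn0.
  have col_v : forall t : 'I_4, cB (v,(t,v)) = c0 v (+) odd t (+) s (+) (bnum lt0 (t,v) * n < r).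
    by move=> t; rewrite hc /col' key_v /colY /= -/iv ltnn addbF.
  have bnv : forall t : 'I_4, bnum lt0 (t, v) = t * n + iv by [].
  pose t0 : 'I_4 := @Ordinal 4 0 isT.
  pose t1 : 'I_4 := @Ordinal 4 1 isT.
  pose t2 : 'I_4 := @Ordinal 4 2 isT.
  pose t3 : 'I_4 := @Ordinal 4 3 isT.
  have ivn : iv < n by apply: rb.
  case: (ltnP bw (2*n+iv)) => hb.
    have big : forall t : 'I_4, 2 <= t -> bnum lt0 (t,v) != bw /\ (bnum lt0 (t,v) * n < r) = false.
      move=> t ht; rewrite bnv.
      have h3 : bw < t * n + iv by have := leq_mul ht (leqnn n); lia.
      have := leq_mul h3 (leqnn n); move: rw; lia.
    case hx: (c0 v (+) s (+) cA v).
      have [b1 b2] := big t3 isT; apply: (claim t3 b1); rewrite col_v b2.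
      by move: hx; case: (c0 v); case: (s); case: (cA v).
    have [b1 b2] := big t2 isT; apply: (claim t2 b1); rewrite col_v b2.
    by move: hx; case: (c0 v); case: (s); case: (cA v).
  have small : forall t : 'I_4, t <= 1 -> bnum lt0 (t,v) != bw /\ (bnum lt0 (t,v) * n < r) = true.
    move=> t ht; rewrite bnv.
    have h3 : t * n + iv < bw by have := leq_mul ht (leqnn n); lia.
    have := leq_mul h3 (leqnn n); move: rw; lia.
  case hx: (c0 v (+) s (+) cA v).
    have [b1 b2] := small t0 isT; apply: (claim t0 b1); rewrite col_v b2.
    by move: hx; case: (c0 v); case: (s); case: (cA v).
  have [b1 b2] := small t1 isT; apply: (claim t1 b1); rewrite col_v b2.
  by move: hx; case: (c0 v); case: (s); case: (cA v).
move=> t nb cv.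
set j := (t, v).
pose g := fun x : T => (x, j).
have ig : injective g by move=> x y [].
have hg : forall x y, p_arc (klt (keyY lt0)) (colY lt0 c0) (g x) (g y) = E x y.
  move=> x y; rewrite -(P0 x y).
  transitivity (p_arc (fun a b => rk n iv (rank lt0 a) < rk n iv (rank lt0 b))
        (fun a => c0 a (+) odd t (+) (rank lt0 a < iv)) x y).
    by rewrite /p_arc /klt /keyY /colY /g /= !ltn_add2l.
  rewrite p_arc_rot; [|exact: rb|exact: rb|exact: ltnW (rb v)].
  apply: p_arc_ext => // a b; exact: (esym (rank_lt S0 a b)).
have Hpb := pullback ig hg HB.
have hvmin : forall x, x != v -> ltB (g v) (g x).
  move=> x nxv; rewrite hl /lt' /g /keyY /= -/n -/iv.
  have h1 : rk n iv iv = 0 by rewrite /rk ltnn subnn.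
  have nr : rank lt0 x != iv by apply: contra nxv => /eqP /ri ->.
  have h2 : 0 < rk n iv (rank lt0 x) < n.
    by move: nr; have := rb x; have := rb v; rewrite /rk -/iv; case: ifP; lia.
  have hs := sep n nb; rewrite h1 addn0.
  move: h2 hs rw (kyb (g x)) rM; rewrite /keyY /g /= -/n -/iv.
  move: (rk n iv (rank lt0 x)) (bnum lt0 j * n) (bw * n) => K P Q.
  rewrite /rk; do 2 case: ifP; lia.
have [hc2 hl2] := ext_unique HA Hpb hv hvmin (esym cv).
by exists g; split=> //; split=> [x y|x]; rewrite ?hc2 ?hl2.
Qed.

Section Geo.
Import Order.TTheory GRing.Theory Num.Theory.
Local Open Scope ring_scope.

Lemma PI_gt2 : 2 < PI.
Proof.
have h := PI2_1. have h2 : IZR 2 = 2 by [].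
move/RltP: h; rewrite RdivE h2 R1E. lra.
Qed.

Definition arcR (d : R) := exists k : int, 0 < d + k%:~R * 2 * PI /\ d + k%:~R * 2 * PI < PI.
Arguments arcR d%_ring_scope.

Lemma S2_arcE q q' : S2_arc q q' <-> arcR (ratr q' - ratr q).
Proof.
have h2 : IZR 2 = 2 by [].
split=> [[k [h1 h3]]|[k [h1 h3]]]; exists k.
  move/RltP: h1; move/RltP: h3; rewrite ?RplusE ?RminusE ?RmultE h2 R0E.
  by move=> a b; split.
by split; apply/RltP; rewrite ?RplusE ?RminusE ?RmultE h2 ?R0E.
Qed.

Lemma int_cases (k : int) : k <= -1 \/ k = 0 \/ k = 1 \/ 2 <= k.
Proof. lia. Qed.

Lemma arc_char (d : R) : - (2 * PI) < d -> d < 2 * PI ->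
  arcR d <-> ((0 < d /\ d < PI) \/ d < - PI).
Proof.
move=> h1 h2; have hp := PI_gt2; have hp0 : 0 < PI by lra. split.
  move=> [k [k1 k2]].
  case: (int_cases k) => [hk|[hk|[hk|hk]]].
  - have h : k%:~R <= (-1 : R) by rewrite -(ler_int R) in hk.
    have : k%:~R * 2 * PI <= -1 * 2 * PI by rewrite !ler_pM2r.
    lra.
  - subst k; left; move: k1 k2; rewrite mulr0z !mul0r addr0; lra.
  - subst k; right; move: k1 k2; rewrite mulr1z !mul1r; lra.
  - have h : (2 : R) <= k%:~R by rewrite -(ler_int R) in hk.
    have : 2 * 2 * PI <= k%:~R * 2 * PI by rewrite !ler_pM2r.
    lra.
move=> [[k1 k2]|k1].
  by exists 0; rewrite mulr0z !mul0r addr0.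
by exists 1; rewrite mulr1z !mul1r; split; lra.
Qed.

Lemma arc_shift (d : R) (j : int) : arcR (d + j%:~R * 2 * PI) <-> arcR d.
Proof.
split=> [[k [k1 k2]]|[k [k1 k2]]].
  exists (k + j); rewrite intrD !mulrDl; move: k1 k2; move: (k%:~R * 2 * PI) (j%:~R * 2 * PI) => a b. split; lra.
exists (k - j); rewrite intrB !mulrBl; move: k1 k2; move: (k%:~R * 2 * PI) (j%:~R * 2 * PI) => a b; split; lra.
Qed.
Lemma arc0 : ~ arcR 0.
Proof.
have hp := PI_gt2.
have h1 : - (2 * PI) < 0 by lra.
have h2 : 0 < 2 * PI by lra.
by move/(arc_char h1 h2) => [[h3 h4]|h3]; lra.
Qed.

Lemma keyed_S2 (U : finType) (key : U -> nat) (col : U -> bool) :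
  injective key -> S2_embeddable (p_arc (klt key) col).
Proof.
move=> ik.
have hp := PI_gt2.
set K := ((\max_(u : U) key u)%nat).+1.
have kK : forall u, (key u < K)%nat by move=> u; rewrite ltnS; apply: leq_bigmax.
have K0 : (0 < K)%nat by [].
set δ : R := ((4 * K)%:R)^-1.
have K0r : 0 < (K%:R : R) by rewrite ltr0n.
have δ0 : 0 < δ by rewrite invr_gt0 ltr0n muln_gt0.
have Kd : K%:R * δ = 1/4.
  rewrite /δ natrM; field; rewrite pnatr_eq0 -lt0n //.
have hb : forall u, 0 <= (key u)%:R * δ /\ (key u)%:R * δ + δ <= 1/4.
  move=> u; split; first by rewrite mulr_ge0 // ltW.
  have -> : (key u)%:R * δ + δ = (key u + 1)%:R * δ by rewrite natrD mulrDl mul1r.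
  by rewrite -Kd ler_pM2r // ler_nat addn1 kK.
pose lo u := (key u)%:R * δ + (if col u then 0 else PI).
have : forall u, exists q : rat, ratr q \in `]lo u, lo u + δ[.
  by move=> u; apply: rat_in_itvoo; lra.
case/fin_all_exists => f hf.
have hx : forall u, lo u < ratr (f u) /\ ratr (f u) < lo u + δ.
  by move=> u; have := hf u; rewrite in_itv /= => /andP [].
have key_claim : forall u v, p_arc (klt key) col u v <-> S2_arc (f u) (f v).
  move=> u v; rewrite S2_arcE.
  have [hu1 hu2] := hx u; have [hv1 hv2] := hx v.
  have [bu1 bu2] := hb u; have [bv1 bv2] := hb v.
  move: hu1 hu2 hv1 hv2; rewrite /lo.
  case: (ltngtP (key u) (key v)) => hk.
  - have : (key u)%:R * δ + δ <= (key v)%:R * δ.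
      have -> : (key u)%:R * δ + δ = (key u + 1)%:R * δ by rewrite natrD mulrDl mul1r.
      by rewrite ler_pM2r // ler_nat addn1.
    rewrite /p_arc /klt hk (ltnNge (key v)) (ltnW hk) /=.
    case: (col u); case: (col v) => /= => hh hu1 hu2 hv1 hv2;
      (rewrite arc_char; [|lra|lra]); split => H; (by []) || lra.
  - have : (key v)%:R * δ + δ <= (key u)%:R * δ.
      have -> : (key v)%:R * δ + δ = (key v + 1)%:R * δ by rewrite natrD mulrDl mul1r.
      by rewrite ler_pM2r // ler_nat addn1.
    rewrite /p_arc /klt hk (ltnNge (key u)) (ltnW hk) /=.
    case: (col u); case: (col v) => /= => hh hu1 hu2 hv1 hv2;
      (rewrite arc_char; [|lra|lra]); split => H; (by []) || lra.
  - have e := ik _ _ hk; subst v.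
    rewrite /p_arc /klt ltnn !andbF subrr; by split => // /arc0.
exists f; split; last exact: key_claim.
move=> u v e; case: (eqVneq u v) => // nuv.
have [_ tot] := slo_tournament col (keyed_slo ik).
have := tot _ _ nuv => /andP [/orP [] h _].
  have h' : S2_arc (f u) (f v) by apply/key_claim.
  by move: h'; rewrite S2_arcE e subrr => /arc0.
have h' : S2_arc (f v) (f u) by apply/key_claim.
by move: h'; rewrite S2_arcE e subrr => /arc0.
Qed.

Lemma S2_ext (T : finType) (E : rel T) :
  is_tournament E -> S2_embeddable E ->
  exists (lt0 : rel T) (c0 : T -> bool), is_extension E lt0 c0.
Proof.
move=> [irr tot] [f [finj hf]].
have hp := PI_gt2.
pose m x := Num.floor (ratr (f x) / (2 * PI)).
pose th x := ratr (f x) - (m x)%:~R * (2 * PI).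
have P0 : 0 < 2 * PI by lra.
have hth : forall x, 0 <= th x /\ th x < 2 * PI.
  move=> x; have h1 := real_floor_le (num_real (ratr (f x) / (2 * PI))).
  have h2 := real_floorD1_gt (num_real (ratr (f x) / (2 * PI))).
  rewrite -/(m x) ler_pdivlMr // in h1.
  rewrite -/(m x) ltr_pdivrMr // intrD mulrDl mul1r in h2.
  rewrite /th; split; lra.
have char : forall x y, E x y <-> ((0 < th y - th x /\ th y - th x < PI) \/ th y - th x < - PI).
  move=> x y; rewrite hf S2_arcE.
  have -> : ratr (f y) - ratr (f x) = (th y - th x) + (m y - m x)%:~R * 2 * PI.
    by rewrite /th intrB; ring.
  rewrite arc_shift; have [x1 x2] := hth x; have [y1 y2] := hth y.
  by apply: arc_char; lra.
pose col x := th x < PI.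
pose kap x := if th x < PI then th x else th x - PI.
pose lt0 := fun x y => kap x < kap y.
have pc : forall x y, p_arc lt0 col x y <->
    ((0 < th y - th x /\ th y - th x < PI) \/ th y - th x < - PI).
  move=> x y; have [x1 x2] := hth x; have [y1 y2] := hth y.
  rewrite /p_arc /lt0 /kap /col.
  case: (ltP (th x) PI) => hx; case: (ltP (th y) PI) => hy /=;
    split => H; (by []) || lra.
exists lt0, col; split; last first.
  by move=> x y; apply/idP/idP => h; [apply/char/pc | apply/pc/char].
split; first by move=> x; rewrite /lt0 ltxx.
split; first by move=> x y z; rewrite /lt0; apply: lt_trans.
move=> x y nxy; rewrite /lt0.
case: (ltgtP (kap x) (kap y)) => // ek.
have := tot _ _ nxy => /andP [/orP [] h _].
  move/char: h; move: ek; have [x1 x2] := hth x; have [y1 y2] := hth y.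
  rewrite /kap; case: (ltP (th x) PI) => hx; case: (ltP (th y) PI) => hy; lra.
move/char: h; move: ek; have [x1 x2] := hth x; have [y1 y2] := hth y.
rewrite /kap; case: (ltP (th x) PI) => hx; case: (ltP (th y) PI) => hy; lra.
Qed.

End Geo.

Theorem lemma3 (T : finType) (E : rel T) :
  is_tournament E -> S2_embeddable E ->
  exists (U : finType) (F : rel U),
    is_tournament F /\ S2_embeddable F /\
    forall (ltA : rel T) (cA : T -> bool), is_extension E ltA cA ->
    forall (ltB : rel U) (cB : U -> bool), is_extension F ltB cB ->
    exists f : T -> U, P2_embedding ltA cA ltB cB f.
Proof.
move=> Ht HS.
have [lt0 [c0 H0]] := S2_ext Ht HS.
have [kinj main] := core H0.
exists (T * ('I_4 * T))%type, (p_arc (klt (keyY lt0)) (colY lt0 c0)).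
split; first exact: slo_tournament (keyed_slo kinj).
split; first exact: keyed_S2 _ kinj.
exact: main.
Qed.
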